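(* Let $\mathcal{F}(X)\subseteq\Psi$ with admissible topology $\Delta$. If $\mathbb{F}$ is commutative and there is a base $\beta$ for the topology of $X$ with $U^+=\{A\in\Psi:A\subseteq U\}\in\Delta$ for every $U\in\beta$, then $(X,\mathbb{F})$ is weakly mixing if and only if $(\Psi,\overline{\mathbb{F}})$ is weakly mixing.
   Context: $(X,d)$ compact metric, $\mathbb{F}=(f_n)$ continuous self-maps with $f_n\circ f_m=f_m\circ f_n$ for all $n,m$; $\omega_n=f_n\circ\cdots\circ f_1$. Weakly mixing: for non-empty open $U_1,U_2,V_1,V_2$ there is $n$ with $\omega_n(U_i)\cap V_i\neq\emptyset$, $i=1,2$. $\mathcal{F}(X)$: non-empty finite subsets; $\Psi\subseteq\mathcal{K}(X)$ invariant under all $\omega_k$; induced system $\overline{\omega}_k(A)=\omega_k(A)$, notions defined analogously on $(\Psi,\Delta)$. Admissible topology: hit-and-miss or hit-and-far-miss type with $x\mapsto\{x\}$ continuous; induced maps continuous. *)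

(* Defs.v *)
From Stdlib Require Import Reals List.
Open Scope R_scope.

Definition is_metric {X : Type} (d : X -> X -> R) : Prop :=
  (forall x y, d x y = 0 <-> x = y) /\
  (forall x y, d x y = d y x) /\
  (forall x y z, d x z <= d x y + d y z).

Definition ball {X : Type} (d : X -> X -> R) (x : X) (r : R) : X -> Prop :=
  fun y => d x y < r.

Definition is_open {X : Type} (d : X -> X -> R) (U : X -> Prop) : Prop :=
  forall x, U x -> exists r, 0 < r /\ forall y, ball d x r y -> U y.

Definition is_closed {X : Type} (d : X -> X -> R) (C : X -> Prop) : Prop :=
  is_open d (fun x => ~ C x).

(* sequential compactness of a subset (equivalent to compactness in metric spaces) *)
Definition seq_compact {X : Type} (d : X -> X -> R) (A : X -> Prop) : Prop :=
  forall u : nat -> X, (forall n, A (u n)) ->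
  exists (phi : nat -> nat) (a : X),
    (forall n, (phi n < phi (S n))%nat) /\ A a /\
    forall eps, 0 < eps -> exists N, forall n, (N <= n)%nat -> d (u (phi n)) a < eps.

Definition compact_metric {X : Type} (d : X -> X -> R) : Prop :=
  is_metric d /\ seq_compact d (fun _ => True).

Definition continuous_map {X : Type} (d : X -> X -> R) (g : X -> X) : Prop :=
  forall x eps, 0 < eps -> exists delta, 0 < delta /\
    forall y, d x y < delta -> d (g x) (g y) < eps.

Definition is_base {X : Type} (d : X -> X -> R) (beta : (X -> Prop) -> Prop) : Prop :=
  (forall B, beta B -> is_open d B) /\
  (forall U, is_open d U -> forall x, U x -> exists B, beta B /\ B x /\ forall y, B y -> U y).

(* f i stands for f_{i+1}; omega f n = f_n o ... o f_1, omega f 0 = id *)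
Fixpoint omega {X : Type} (f : nat -> X -> X) (n : nat) : X -> X :=
  match n with
  | O => fun x => x
  | S k => fun x => f k (omega f k x)
  end.

Definition image {X : Type} (g : X -> X) (A : X -> Prop) : X -> Prop :=
  fun y => exists x, A x /\ g x = y.

Definition nonempty {T : Type} (A : T -> Prop) : Prop := exists x, A x.

Definition weakly_mixing {X : Type} (d : X -> X -> R) (f : nat -> X -> X) : Prop :=
  forall U1 U2 V1 V2 : X -> Prop,
    is_open d U1 -> is_open d U2 -> is_open d V1 -> is_open d V2 ->
    nonempty U1 -> nonempty U2 -> nonempty V1 -> nonempty V2 ->
    exists n, (1 <= n)%nat /\
      (exists x, U1 x /\ V1 (omega f n x)) /\
      (exists x, U2 x /\ V2 (omega f n x)).

Definition finite_nonempty {X : Type} (A : X -> Prop) : Prop :=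
  exists l : list X, l <> nil /\ forall x, A x <-> In x l.

Definition nonempty_compact {X : Type} (d : X -> X -> R) (A : X -> Prop) : Prop :=
  nonempty A /\ seq_compact d A.

Definition singleton {X : Type} (x : X) : X -> Prop := fun y => y = x.

Definition upper {X : Type} (Psi : (X -> Prop) -> Prop) (U : X -> Prop) :
  (X -> Prop) -> Prop := fun A => Psi A /\ forall x, A x -> U x.

Definition hit {X : Type} (U : X -> Prop) : (X -> Prop) -> Prop :=
  fun A => exists x, A x /\ U x.

Definition miss {X : Type} (C : X -> Prop) : (X -> Prop) -> Prop :=
  fun A => forall x, A x -> ~ C x.

Definition farmiss {X : Type} (d : X -> X -> R) (C : X -> Prop) : (X -> Prop) -> Prop :=
  fun A => exists eps, 0 < eps /\ forall a c, A a -> C c -> eps <= d a c.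

Definition generated_topology {X : Type} (Psi : (X -> Prop) -> Prop)
  (S : ((X -> Prop) -> Prop) -> Prop) (Delta : ((X -> Prop) -> Prop) -> Prop) : Prop :=
  forall W, Delta W <->
    ((forall A, W A -> Psi A) /\
     forall A, W A -> exists l : list ((X -> Prop) -> Prop),
        (forall S0, In S0 l -> S S0) /\ (forall S0, In S0 l -> S0 A) /\
        forall B, Psi B -> (forall S0, In S0 l -> S0 B) -> W B).

(* hit-and-miss (resp. hit-and-far-miss) topology: hit sets are all open sets,
   miss sets range over some family Mf of closed sets *)
Definition hit_and_miss_type {X : Type} (d : X -> X -> R)
  (Psi : (X -> Prop) -> Prop) (Delta : ((X -> Prop) -> Prop) -> Prop) : Prop :=
  exists Mf : (X -> Prop) -> Prop,
    (forall C, Mf C -> is_closed d C) /\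
    (generated_topology Psi
       (fun S0 => (exists U, is_open d U /\ S0 = hit U) \/
                  (exists C, Mf C /\ S0 = miss C)) Delta \/
     generated_topology Psi
       (fun S0 => (exists U, is_open d U /\ S0 = hit U) \/
                  (exists C, Mf C /\ S0 = farmiss d C)) Delta).

Definition admissible {X : Type} (d : X -> X -> R) (f : nat -> X -> X)
  (Psi : (X -> Prop) -> Prop) (Delta : ((X -> Prop) -> Prop) -> Prop) : Prop :=
  hit_and_miss_type d Psi Delta /\
  (* x |-> {x} is continuous X -> (Psi, Delta) *)
  (forall W, Delta W -> is_open d (fun x => W (singleton x))) /\
  (* induced maps omega_k-bar are continuous on (Psi, Delta) *)
  (forall k W, Delta W -> Delta (fun A => Psi A /\ W (image (omega f k) A))).

Definition hyper_weakly_mixing {X : Type} (f : nat -> X -> X)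
  (Delta : ((X -> Prop) -> Prop) -> Prop) : Prop :=
  forall U1 U2 V1 V2 : (X -> Prop) -> Prop,
    Delta U1 -> Delta U2 -> Delta V1 -> Delta V2 ->
    nonempty U1 -> nonempty U2 -> nonempty V1 -> nonempty V2 ->
    exists n, (1 <= n)%nat /\
      (exists A, U1 A /\ V1 (image (omega f n) A)) /\
      (exists A, U2 A /\ V2 (image (omega f n) A)).

(* Main.v *)
Require Import Defs.
From Stdlib Require Import Reals List Lra.
Open Scope R_scope.

Lemma omega_comm_f {X} (f : nat -> X -> X) :
  (forall n m x, f n (f m x) = f m (f n x)) ->
  forall k m x, f m (omega f k x) = omega f k (f m x).
Proof. intros H k; induction k as [|k IH]; intros m x; simpl; [reflexivity|].
  rewrite H, IH. reflexivity. Qed.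

Lemma omega_comm {X} (f : nat -> X -> X) :
  (forall n m x, f n (f m x) = f m (f n x)) ->
  forall n k x, omega f n (omega f k x) = omega f k (omega f n x).
Proof. intros H n; induction n as [|n IH]; intros k x; simpl; [reflexivity|].
  rewrite IH. apply omega_comm_f; exact H. Qed.

Lemma omega_cont {X} (d : X -> X -> R) f :
  (forall n, continuous_map d (f n)) -> forall n, continuous_map d (omega f n).
Proof. intros Hf n; induction n as [|n IH]; simpl.
- intros x eps He. exists eps. split; [exact He| intros y Hy; exact Hy].
- intros x eps He. destruct (Hf n (omega f n x) eps He) as [d1 [Hd1 H1]].
  destruct (IH x d1 Hd1) as [d2 [Hd2 H2]]. exists d2; split; [exact Hd2|].
  intros y Hy. apply H1, H2, Hy.
Qed.

Lemma preimage_open {X} (d : X -> X -> R) g U :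
  continuous_map d g -> is_open d U -> is_open d (fun x => U (g x)).
Proof. intros Hg HU x Hx. destruct (HU (g x) Hx) as [r [Hr H]].
  destruct (Hg x r Hr) as [de [Hde H2]]. exists de; split; auto.
  intros y Hy. apply H. unfold ball in *. apply H2. exact Hy. Qed.

Lemma open_and {X} (d : X -> X -> R) U V :
  is_open d U -> is_open d V -> is_open d (fun x => U x /\ V x).
Proof. intros HU HV x [Ux Vx]. destruct (HU x Ux) as [r1 [H1 K1]].
  destruct (HV x Vx) as [r2 [H2 K2]].
  exists (Rmin r1 r2). split. apply Rmin_pos; auto.
  intros y Hy; unfold ball in *; split; [apply K1|apply K2]; unfold ball;
  eapply Rlt_le_trans; try exact Hy; [apply Rmin_l | apply Rmin_r].
Qed.

Lemma open_true {X} (d : X -> X -> R) : is_open d (fun _ => True).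
Proof. intros x _. exists 1. split; [lra| auto]. Qed.

Definition goodp {X} (d : X -> X -> R) (p : (X -> Prop) * (X -> Prop)) : Prop :=
  is_open d (fst p) /\ is_open d (snd p) /\ nonempty (fst p) /\ nonempty (snd p).

Lemma filter_lemma {X} (d : X -> X -> R) f :
  weakly_mixing d f ->
  (forall n m x, f n (f m x) = f m (f n x)) ->
  (forall n, continuous_map d (f n)) ->
  forall L, L <> nil -> (forall p, In p L -> goodp d p) ->
  exists q, goodp d q /\ forall k, (exists x, fst q x /\ snd q (omega f k x)) ->
    forall p, In p L -> exists x, fst p x /\ snd p (omega f k x).
Proof.
  intros HWM Hc Hf L; induction L as [|p L IH]; intros Hne Hg.
  - contradiction.
  - destruct L as [|p' L'].
    + exists p; split; [apply Hg; left; auto|]. intros k Hk p0 [<-|[]]; exact Hk.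
    + destruct IH as [q [Hq Hq2]]; [discriminate| intros; apply Hg; right; auto|].
      destruct (Hg p (or_introl eq_refl)) as [o1 [o2 [n1 n2]]].
      destruct Hq as [o1' [o2' [n1' n2']]].
      destruct (HWM (fst p) (snd p) (fst q) (snd q) o1 o2 o1' o2' n1 n2 n1' n2')
        as [n [_ [[x [Hx1 Hx2]] [y [Hy1 Hy2]]]]].
      exists (fun z => fst p z /\ fst q (omega f n z), fun z => snd p z /\ snd q (omega f n z)).
      split.
      * split; [|split; [|split]]; simpl.
        -- apply open_and; auto. apply preimage_open; auto. apply omega_cont; auto.
        -- apply open_and; auto. apply preimage_open; auto. apply omega_cont; auto.
        -- exists x; auto.
        -- exists y; auto.
      * intros k [z [[Hz1 Hz2] [Hz3 Hz4]]] p0 Hp0. destruct Hp0 as [<-|Hp0].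
        -- exists z; auto.
        -- apply (Hq2 k); [| exact Hp0]. exists (omega f n z). split; auto.
           rewrite (omega_comm f Hc k n z). exact Hz4.
Qed.

Lemma multi_wm {X} (d : X -> X -> R) f :
  weakly_mixing d f ->
  (forall n m x, f n (f m x) = f m (f n x)) ->
  (forall n, continuous_map d (f n)) ->
  forall L, L <> nil -> (forall p, In p L -> goodp d p) ->
  exists n, (1 <= n)%nat /\ forall p, In p L -> exists x, fst p x /\ snd p (omega f n x).
Proof.
  intros HWM Hc Hf L Hne Hg.
  destruct (filter_lemma d f HWM Hc Hf L Hne Hg) as [q [[o1 [o2 [n1 n2]]] Hq2]].
  destruct (HWM (fst q) (fst q) (snd q) (snd q) o1 o1 o2 o2 n1 n1 n2 n2)
    as [n [Hn [[x [Hx1 Hx2]] _]]].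
  exists n; split; auto. apply Hq2. exists x; auto.
Qed.

Lemma choose_pts {X} (g : X -> X) (L : list ((X->Prop)*(X->Prop))) :
  (forall p, In p L -> exists x, fst p x /\ snd p (g x)) ->
  exists xs, (forall x, In x xs -> exists p, In p L /\ fst p x /\ snd p (g x)) /\
             (forall p, In p L -> exists x, In x xs /\ fst p x /\ snd p (g x)).
Proof.
  induction L as [|p L IH]; intros H.
  - exists nil; split; intros ? [].
  - destruct (H p (or_introl eq_refl)) as [x Hx].
    destruct IH as [xs [H1 H2]]; [intros; apply H; right; auto|].
    exists (x :: xs); split.
    + intros y [<-|Hy]; [exists p; split; [left|]; auto|].
      destruct (H1 y Hy) as [p0 [Hp0 Hp1]]; exists p0; split; [right|]; auto.
    + intros p0 [<-|Hp0]; [exists x; split; [left|]; auto|].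
      destruct (H2 p0 Hp0) as [y [Hy Hy2]]; exists y; split; [right|]; auto.
Qed.

Definition goodS {X} (d : X -> X -> R) (S0 : (X -> Prop) -> Prop) : Prop :=
  (exists U, is_open d U /\ S0 = hit U) \/ (exists C, is_closed d C /\ S0 = miss C) \/
  (exists C, S0 = farmiss d C).

Lemma approx_one {X} (d : X -> X -> R) (A0 : X -> Prop) S0 :
  is_metric d -> goodS d S0 -> S0 A0 ->
  exists G Ps, is_open d G /\ (forall x, A0 x -> G x) /\
    (forall P, In P Ps -> is_open d P /\ exists a, A0 a /\ P a) /\
    (forall A : X -> Prop, (forall x, A x -> G x) -> (forall P, In P Ps -> hit P A) -> S0 A).
Proof.
  intros Hm [[U [HU ->]]|[[C [HC ->]]|[C ->]]] HA0.
  - exists (fun _ => True), (U :: nil). split; [apply open_true|]. split; [auto|].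
    split.
    + intros P [<-|[]]. split; auto.
    + intros A _ HP. apply HP; left; auto.
  - exists (fun x => ~ C x), nil. split; [exact HC|]. split; [exact HA0|].
    split; [intros ? []|]. intros A HA _ x Hx. apply HA, Hx.
  - destruct HA0 as [eps [He Hfar]].
    destruct Hm as [Hm0 [Hsym Htri]].
    exists (fun x => exists a, A0 a /\ d a x < eps/2), nil. split.
    + intros x [a [Ha Hax]]. exists (eps/2 - d a x). split; [lra|].
      intros y Hy; unfold ball in Hy. exists a; split; auto.
      pose proof (Htri a x y). lra.
    + split; [|split; [intros ? []|]].
      * intros x Hx. exists x. split; auto. rewrite (proj2 (Hm0 x x) eq_refl). lra.
      * intros A HA _. exists (eps/2). split; [lra|].
        intros a' c Ha' Hc. destruct (HA a' Ha') as [a [Ha Hd]].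
        pose proof (Hfar a c Ha Hc). pose proof (Htri a a' c). lra.
Qed.

Lemma approx_list {X} (d : X -> X -> R) (A0 : X -> Prop) :
  is_metric d -> forall l, (forall S0, In S0 l -> goodS d S0 /\ S0 A0) ->
  exists G Ps, is_open d G /\ (forall x, A0 x -> G x) /\
    (forall P, In P Ps -> is_open d P /\ exists a, A0 a /\ P a) /\
    (forall A : X -> Prop, (forall x, A x -> G x) -> (forall P, In P Ps -> hit P A) ->
       forall S0, In S0 l -> S0 A).
Proof.
  intros Hm l; induction l as [|s l IH]; intros Hl.
  - exists (fun _ => True), nil. split; [apply open_true|]. split; [auto|].
    split; [intros ? []|]. intros _ _ _ ? [].
  - destruct (Hl s (or_introl eq_refl)) as [Hg Hs].
    destruct (approx_one d A0 s Hm Hg Hs) as [G0 [P0s [HG0 [HA0 [HP0 Hc0]]]]].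
    destruct IH as [G' [Ps' [HG' [HA' [HP' Hc']]]]]; [intros; apply Hl; right; auto|].
    exists (fun x => G0 x /\ G' x), (P0s ++ Ps'). split; [apply open_and; auto|].
    split; [intros x Hx; split; auto|]. split.
    + intros P HP. apply in_app_or in HP. destruct HP; auto.
    + intros A HA Hh S0 [<-|HS0].
      * apply Hc0; [intros x Hx; apply (HA x Hx)|]. intros P HP; apply Hh, in_or_app; auto.
      * apply Hc'; auto; [intros x Hx; apply (HA x Hx)|]. intros P HP; apply Hh, in_or_app; auto.
Qed.

Lemma approx {X} (d : X -> X -> R) (Psi : (X -> Prop) -> Prop) Delta W A0 :
  is_metric d -> hit_and_miss_type d Psi Delta ->
  (forall A, Psi A -> nonempty_compact d A) ->
  Delta W -> W A0 ->
  exists G Ps, is_open d G /\ nonempty G /\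
    (forall P, In P Ps -> is_open d P /\ nonempty P /\ forall x, P x -> G x) /\
    (forall A, Psi A -> (forall x, A x -> G x) -> (forall P, In P Ps -> hit P A) -> W A).
Proof.
  intros Hm Hhm Hnc HW HA0.
  assert (Hl : Psi A0 /\ exists l, (forall S0, In S0 l -> goodS d S0 /\ S0 A0) /\
     (forall B, Psi B -> (forall S0, In S0 l -> S0 B) -> W B)).
  { destruct Hhm as [Mf [HMf [Hgt|Hgt]]];
    destruct (proj1 (Hgt W) HW) as [HPsi Hloc];
    destruct (Hloc A0 HA0) as [l [Hl1 [Hl2 Hl3]]];
    (split; [apply HPsi, HA0|]); exists l; (split; [|exact Hl3]);
    intros S0 HS0; (split; [|apply Hl2, HS0]);
    destruct (Hl1 S0 HS0) as [[U [HU ->]]|[C [HC ->]]].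
    - left; exists U; auto.
    - right; left; exists C; auto.
    - left; exists U; auto.
    - right; right; exists C; auto. }
  destruct Hl as [HPsi0 [l [Hl1 Hl3]]].
  destruct (approx_list d A0 Hm l Hl1) as [G [Ps [HG [HAG [HPs Hc]]]]].
  destruct (proj1 (Hnc A0 HPsi0)) as [a Ha].
  exists G, (map (fun P x => P x /\ G x) Ps). split; [exact HG|].
  split; [exists a; auto|]. split.
  - intros P' HP'. apply in_map_iff in HP'. destruct HP' as [P [<- HP]].
    destruct (HPs P HP) as [HoP [b [Hb HPb]]].
    split; [apply open_and; auto|]. split; [exists b; auto|]. intros x [_ Hx]; exact Hx.
  - intros A HPA HAG' Hh. apply Hl3; [exact HPA|]. apply Hc; [exact HAG'|].
    intros P HP. destruct (Hh _ (in_map (fun P x => P x /\ G x) _ _ HP)) as [x [Ax [Px _]]].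
    exists x; auto.
Qed.

Lemma build {X} (f : nat -> X -> X) (Psi : (X -> Prop) -> Prop)
  (W V : (X -> Prop) -> Prop) G Ps K Qs n xs :
  (forall A, finite_nonempty A -> Psi A) ->
  (forall k A, Psi A -> Psi (image (omega f k) A)) ->
  (forall A, Psi A -> (forall x, A x -> G x) -> (forall P, In P Ps -> hit P A) -> W A) ->
  (forall A, Psi A -> (forall x, A x -> K x) -> (forall P, In P Qs -> hit P A) -> V A) ->
  (forall P, In P Ps -> forall x, P x -> G x) ->
  (forall P, In P Qs -> forall x, P x -> K x) ->
  (forall x, In x xs -> exists p, In p (list_prod (G::Ps) (K::Qs)) /\ fst p x /\ snd p (omega f n x)) ->
  (forall p, In p (list_prod (G::Ps) (K::Qs)) -> exists x, In x xs /\ fst p x /\ snd p (omega f n x)) ->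
  exists A, W A /\ V (image (omega f n) A).
Proof.
  intros Hfin Himg HW HV HPs HQs Hpts Hcov.
  assert (inL : forall s t, In s (G::Ps) -> In t (K::Qs) -> In (s,t) (list_prod (G::Ps) (K::Qs))).
  { intros s t Hs Ht. apply in_prod_iff; auto. }
  assert (HsubG : forall s, In s (G::Ps) -> forall x, s x -> G x).
  { intros s [<-|Hs]; eauto. }
  assert (HsubK : forall s, In s (K::Qs) -> forall x, s x -> K x).
  { intros s [<-|Hs]; eauto. }
  assert (HPsiA : Psi (fun x => In x xs)).
  { apply Hfin. exists xs. split; [| intros; split; auto].
    destruct (Hcov (G,K) (inL G K (or_introl eq_refl) (or_introl eq_refl))) as [x [Hx _]].
    intros E; rewrite E in Hx; exact Hx. }
  exists (fun x => In x xs); split.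
  - apply HW; auto.
    + intros x Hx. destruct (Hpts x Hx) as [[s t] [Hp [Hs Ht]]]. apply in_prod_iff in Hp.
      exact (HsubG s (proj1 Hp) x Hs).
    + intros P HP. destruct (Hcov (P,K) (inL P K (or_intror HP) (or_introl eq_refl)))
        as [x [Hx [HPx _]]]. exists x; split; auto.
  - apply HV; [apply Himg; exact HPsiA| |].
    + intros y [x [Hx <-]]. destruct (Hpts x Hx) as [[s t] [Hp [Hs Ht]]].
      apply in_prod_iff in Hp. exact (HsubK t (proj2 Hp) _ Ht).
    + intros Q HQ. destruct (Hcov (G,Q) (inL G Q (or_introl eq_refl) (or_intror HQ)))
        as [x [Hx [_ HQx]]]. exists (omega f n x). split; [exists x; split; auto| exact HQx].
Qed.

Lemma srcprops {X} (d : X -> X -> R) (G : X -> Prop) Ps :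
  is_open d G -> nonempty G ->
  (forall P, In P Ps -> is_open d P /\ nonempty P /\ forall x, P x -> G x) ->
  forall s, In s (G::Ps) -> is_open d s /\ nonempty s.
Proof. intros HG Hn HP s [<-|Hs]; [auto|]. destruct (HP s Hs) as [? [? _]]; auto. Qed.

Theorem mainTheorem6 (X : Type) (d : X -> X -> R) (f : nat -> X -> X)
  (Psi : (X -> Prop) -> Prop) (Delta : ((X -> Prop) -> Prop) -> Prop)
  (beta : (X -> Prop) -> Prop) :
  compact_metric d ->
  (forall n, continuous_map d (f n)) ->
  (forall n m x, f n (f m x) = f m (f n x)) ->
  (forall A, finite_nonempty A -> Psi A) ->
  (forall A, Psi A -> nonempty_compact d A) ->
  (forall k A, Psi A -> Psi (image (omega f k) A)) ->
  admissible d f Psi Delta ->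
  is_base d beta ->
  (forall U, beta U -> Delta (upper Psi U)) ->
  (weakly_mixing d f <-> hyper_weakly_mixing f Delta).
Proof.
  intros [Hm _] Hf Hc Hfin Hnc Himg [Hhm _] [Hb1 Hb2] Hup. split.
  - intros HWM W1 W2 V1 V2 HW1 HW2 HV1 HV2 [A1 HA1] [A2 HA2] [B1 HB1] [B2 HB2].
    destruct (approx d Psi Delta W1 A1 Hm Hhm Hnc HW1 HA1) as [G1 [Ps1 [HG1 [HnG1 [HPs1 Hc1]]]]].
    destruct (approx d Psi Delta W2 A2 Hm Hhm Hnc HW2 HA2) as [G2 [Ps2 [HG2 [HnG2 [HPs2 Hc2]]]]].
    destruct (approx d Psi Delta V1 B1 Hm Hhm Hnc HV1 HB1) as [K1 [Qs1 [HK1 [HnK1 [HQs1 Hd1]]]]].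
    destruct (approx d Psi Delta V2 B2 Hm Hhm Hnc HV2 HB2) as [K2 [Qs2 [HK2 [HnK2 [HQs2 Hd2]]]]].
    set (L1 := list_prod (G1::Ps1) (K1::Qs1)).
    set (L2 := list_prod (G2::Ps2) (K2::Qs2)).
    assert (Hgood : forall p, In p (L1 ++ L2) -> goodp d p).
    { intros [s t] Hp. apply in_app_or in Hp.
      destruct Hp as [Hp|Hp]; apply in_prod_iff in Hp; destruct Hp as [Hs Ht].
      - destruct (srcprops d G1 Ps1 HG1 HnG1 HPs1 s Hs).
        destruct (srcprops d K1 Qs1 HK1 HnK1 HQs1 t Ht). split; auto.
      - destruct (srcprops d G2 Ps2 HG2 HnG2 HPs2 s Hs).
        destruct (srcprops d K2 Qs2 HK2 HnK2 HQs2 t Ht). split; auto. }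
    assert (Hne : L1 ++ L2 <> nil).
    { intros E. assert (HI : In (G1,K1) (L1 ++ L2)).
      { apply in_or_app; left. apply in_prod_iff; split; left; auto. }
      rewrite E in HI; exact HI. }
    destruct (multi_wm d f HWM Hc Hf (L1 ++ L2) Hne Hgood) as [n [Hn Hall]].
    destruct (choose_pts (omega f n) L1) as [xs1 [P1 C1]].
    { intros; apply Hall, in_or_app; auto. }
    destruct (choose_pts (omega f n) L2) as [xs2 [P2 C2]].
    { intros; apply Hall, in_or_app; auto. }
    exists n; split; [exact Hn|]. split.
    + eapply (build f Psi W1 V1 G1 Ps1 K1 Qs1 n xs1); eauto;
        [intros P HP; apply (HPs1 P HP) | intros P HP; apply (HQs1 P HP)].
    + eapply (build f Psi W2 V2 G2 Ps2 K2 Qs2 n xs2); eauto;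
        [intros P HP; apply (HPs2 P HP) | intros P HP; apply (HQs2 P HP)].
  - intros HH U1 U2 V1 V2 HU1 HU2 HV1 HV2 [x1 Hx1] [x2 Hx2] [y1 Hy1] [y2 Hy2].
    destruct (Hb2 U1 HU1 x1 Hx1) as [C1 [HC1 [HC1x HC1s]]].
    destruct (Hb2 U2 HU2 x2 Hx2) as [C2 [HC2 [HC2x HC2s]]].
    destruct (Hb2 V1 HV1 y1 Hy1) as [D1 [HD1 [HD1x HD1s]]].
    destruct (Hb2 V2 HV2 y2 Hy2) as [D2 [HD2 [HD2x HD2s]]].
    assert (Hsing : forall (B : X -> Prop) z, B z -> nonempty (upper Psi B)).
    { intros B z Hz. exists (singleton z). split.
      - apply Hfin. exists (z :: nil). split; [discriminate|].
        intros y; unfold singleton; simpl; split; intro H.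
        + left; symmetry; exact H.
        + destruct H as [H|[]]; symmetry; exact H.
      - intros y Hy; unfold singleton in Hy; subst; exact Hz. }
    destruct (HH _ _ _ _ (Hup C1 HC1) (Hup C2 HC2) (Hup D1 HD1) (Hup D2 HD2)
       (Hsing _ _ HC1x) (Hsing _ _ HC2x) (Hsing _ _ HD1x) (Hsing _ _ HD2x))
      as [n [Hn [[A [[HPA HAs] [_ HIs]]] [A' [[HPA' HAs'] [_ HIs']]]]]].
    exists n; split; [exact Hn|]. split.
    + destruct (proj1 (Hnc A HPA)) as [a Ha]. exists a. split; [apply HC1s, HAs, Ha|].
      apply HD1s, HIs. exists a; auto.
    + destruct (proj1 (Hnc A' HPA')) as [a Ha]. exists a. split; [apply HC2s, HAs', Ha|].
      apply HD2s, HIs'. exists a; auto.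
Qed.
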